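(* Let $G$ be a connected finite simple graph with at least one edge such that $\chi(G) = \Delta(G)$ and ${\rm vs}_{\chi}(G) = 1$. Then there exists a vertex $v \in V(G)$ with $d_G(v) = \Delta(G)$ and $\chi(G - v) = \Delta(G) - 1$.
   Context: $\chi(G)$ is the chromatic number, $\Delta(G)$ the maximum degree, and $d_G(v)$ the degree of $v$ in $G$. The chromatic vertex stability number ${\rm vs}_{\chi}(G)$ is the minimum number of vertices of $G$ whose deletion results in a graph $H$ with $\chi(H) = \chi(G)-1$. *)

(* Defs.v *)
From mathcomp Require Import all_boot all_order.
Set Implicit Arguments. Unset Strict Implicit. Unset Printing Implicit Defensive.

Definition simple_graph (T : finType) (e : rel T) : Prop :=
  symmetric e /\ irreflexive e.

(* G[S] has a proper colouring with colours {0,..,k-1}.  (The guard x != y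
   is vacuous for simple graphs; it only makes the definition total.) *)
Definition colorable (T : finType) (e : rel T) (S : {set T}) (k : nat) : bool :=
  [exists f : {ffun T -> 'I_k},
     [forall x in S, forall y in S, (x != y) && e x y ==> (f x != f y)]].

Lemma colorable_exists (T : finType) (e : rel T) (S : {set T}) :
  exists k, colorable e S k.
Proof.
exists #|T|; apply/existsP; exists [ffun x => enum_rank x].
apply/forallP => x; apply/implyP => _; apply/forallP => y; apply/implyP => _.
apply/implyP => /andP [nxy _]; rewrite !ffunE.
by apply: contra nxy => /eqP /enum_rank_inj ->.
Qed.

Definition chi (T : finType) (e : rel T) (S : {set T}) : nat :=
  ex_minn (colorable_exists e S).

Definition chiG (T : finType) (e : rel T) : nat := chi e [set: T].

Definition deg (T : finType) (e : rel T) (v : T) : nat := #|[set u | e v u]|.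

Definition maxdeg (T : finType) (e : rel T) : nat := \max_(v : T) deg e v.

Definition vs_chi_eq (T : finType) (e : rel T) (k : nat) : Prop :=
  (exists X : {set T}, #|X| = k /\ chi e (~: X) = (chiG e).-1) /\
  (forall X : {set T}, chi e (~: X) = (chiG e).-1 -> k <= #|X|).

Definition connected_graph (T : finType) (e : rel T) : Prop :=
  forall x y : T, connect e x y.

(* Main.v *)
Require Import Defs.
From mathcomp Require Import all_boot all_order.

Lemma colP (T : finType) (e : rel T) (S : {set T}) k :
  colorable e S k <-> exists f : T -> 'I_k,
    forall x y, x \in S -> y \in S -> x != y -> e x y -> f x != f y.
Proof.
split.
- move/existsP=> [f /forallP H]; exists f => x y xS yS nxy exy.
  move: (H x) => /implyP /(_ xS) /forallP /(_ y) /implyP /(_ yS) /implyP; apply.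
  by rewrite nxy exy.
- move=> [f H]; apply/existsP; exists (finfun f); apply/forallP=> x.
  apply/implyP=> xS; apply/forallP=> y; apply/implyP=> yS.
  apply/implyP=> /andP[nxy exy]; rewrite !ffunE; exact: H.
Qed.

Lemma chi_min (T : finType) (e : rel T) S j : colorable e S j -> chi e S <= j.
Proof. by rewrite /chi; case: ex_minnP => m _; apply. Qed.

Lemma chi_col (T : finType) (e : rel T) S : colorable e S (chi e S).
Proof. by rewrite /chi; case: ex_minnP. Qed.

Lemma chi_eq (T : finType) (e : rel T) S k : colorable e S k ->
  (forall j, colorable e S j -> k <= j) -> chi e S = k.
Proof.
move=> ck H; apply/eqP; rewrite eqn_leq chi_min //=; apply: H; exact: chi_col.
Qed.

Lemma up (T : finType) (e : rel T) u j :
  colorable e [set~ u] j -> colorable e setT j.+1.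
Proof.
move/colP=> [f H]; apply/colP.
exists (fun x => if x == u then ord_max else widen_ord (leqnSn j) (f x)).
move=> x y _ _; case: (eqVneq x u) => [-> | xu]; case: (eqVneq y u) => [-> | yu] //=.
- move=> _ _; apply/eqP => /(congr1 val) /= h.
  by move: (ltn_ord (f y)); rewrite -h ltnn.
- move=> _ _; apply/eqP => /(congr1 val) /= h.
  by move: (ltn_ord (f x)); rewrite h ltnn.
- move=> nxy exy; apply: contra (H x y _ _ nxy exy) => [/eqP /(congr1 val) /= h||].
  + by apply/eqP/val_inj.
  + by rewrite !inE.
  + by rewrite !inE.
Qed.

Lemma step (T : finType) (e : rel T) k v u : symmetric e ->
  ~ colorable e setT k -> colorable e [set~ v] k -> deg e v <= k -> e v u ->
  colorable e [set~ u] k.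
Proof.
move=> sym notT /colP[c Hc] dv evu.
case: (boolP [exists w, [&& e v w, w != u & c w == c u]]).
- move=> /existsP [w /and3P [evw wu /eqP cw]]; exfalso; apply: notT.
  set N := [set x | e v x].
  have sub : c @: N \subset c @: (N :\ u).
    apply/subsetP => _ /imsetP [x xN ->].
    case: (eqVneq x u) => [-> | xu].
      by rewrite -cw; apply: imset_f; rewrite in_setD1 wu /N inE.
    by apply: imset_f; rewrite in_setD1 xu.
  have lt : #|c @: N| < k.
    apply: leq_ltn_trans (subset_leq_card sub) _.
    apply: leq_ltn_trans (leq_imset_card _ _) _.
    move: dv; rewrite /deg -/N (cardsD1 u N) inE evu; done.
  have /subsetPn [a _ aN] : ~~ ([set: 'I_k] \subset c @: N).
    by apply/negP => /subset_leq_card; rewrite cardsT card_ord leqNgt lt.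
  apply/colP; exists (fun x => if x == v then a else c x).
  move=> x y _ _; case: (eqVneq x v) => [-> | xv]; case: (eqVneq y v) => [-> | yv] //=.
  + move=> _ evy; apply: contraNneq aN => ->; apply: imset_f; by rewrite /N inE.
  + move=> _ exv; rewrite eq_sym; apply: contraNneq aN => ->; apply: imset_f.
    by rewrite /N inE sym.
  + move=> nxy exy; apply: Hc => //; by rewrite !inE.
- move=> /existsPn nw.
  apply/colP; exists (fun x => if x == v then c u else c x).
  move=> x y xS yS; case: (eqVneq x v) => [-> | xv]; case: (eqVneq y v) => [-> | yv] //=.
  + move=> _ evy; rewrite eq_sym; move: (nw y); rewrite evy /=.
    by rewrite !inE in yS; rewrite yS.
  + move=> _ exv; move: (nw x); rewrite sym exv /=.
    by rewrite !inE in xS; rewrite xS.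
  + move=> nxy exy; apply: Hc => //; by rewrite !inE.
Qed.

Theorem lemma3 (T : finType) (e : rel T) :
  simple_graph e ->
  connected_graph e ->
  (exists x y : T, e x y) ->
  chiG e = maxdeg e ->
  vs_chi_eq e 1 ->
  exists v : T, deg e v = maxdeg e /\ chi e [set~ v] = (maxdeg e).-1.
Proof.
move=> [sym irr] conn [x0 [y0 exy]] hchi [[X [cX hX]] _].
have D1 : 0 < maxdeg e.
  apply: leq_trans (leq_bigmax x0); rewrite /deg card_gt0.
  by apply/set0Pn; exists y0; rewrite inE.
set k := (maxdeg e).-1.
have hD : maxdeg e = k.+1 by rewrite prednK.
have notT : ~ colorable e setT k.
  by move=> /chi_min; rewrite -/(chiG e) hchi hD ltnn.
have critP u : colorable e [set~ u] k -> chi e [set~ u] = k.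
  move=> cu; apply: chi_eq => // j /up /chi_min.
  by rewrite -/(chiG e) hchi hD.
have degle u : deg e u <= maxdeg e by apply: leq_bigmax.
have /cards1P [v Xv] : #|X| == 1 by rewrite cX.
  subst X.
have cv : colorable e [set~ v] k.
  by have := @chi_col T e [set~ v]; rewrite hX hchi.
clear hX cX.
case: (boolP [exists u, (deg e u == maxdeg e) && colorable e [set~ u] k]).
  by move=> /existsP [u /andP [/eqP du cu]]; exists u; split => //; rewrite critP.
move=> /existsPn none.
have dlt u : colorable e [set~ u] k -> deg e u <= k.
  move=> cu; have := degle u; rewrite leq_eqVlt; move: (none u); rewrite cu andbT.
  by move=> /negbTE ->; rewrite hD.
have allP w : colorable e [set~ w] k.
  have /connectP [p pth ->] := conn v w.
  elim: p v cv pth => [|z p IH] u cu //= /andP [euz pth].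
  apply: IH pth; apply: step euz => //; exact: dlt.
have : maxdeg e <= k by apply/bigmax_leqP => u _; apply: dlt.
by rewrite hD ltnn.
Qed.
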